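(* For each $n\in\mathbb{N}$ let $A_n\subseteq\mathcal{R}$ be L-measurable, with $\lim_{n\to\infty}M(A_n)=0$, and let $X\subseteq\mathcal{R}$ be outer measurable. Then $X\cap\bigcup_{n=1}^\infty A_n$ is outer measurable, the limit $\lim_{N\to\infty}M_u\big(X\cap\bigcup_{n=1}^N A_n\big)$ exists in $\mathcal{R}$, and $$\lim_{N\to\infty}M_u\Big(X\cap\bigcup_{n=1}^N A_n\Big)=M_u\Big(X\cap\bigcup_{n=1}^\infty A_n\Big).$$
   Context: $\mathcal{R}$ denotes the Levi-Civita field: functions $x:\mathbb{Q}\to\mathbb{R}$ with left-finite support, with componentwise addition and formal power series multiplication, ordered by $x>0$ iff $x\ne0$ and $x[\min\operatorname{supp}x]>0$; it is a non-Archimedean ordered field extension of $\mathbb{R}$, Cauchy complete in the order topology, in which all limits and series are taken (a series $\sum a_n$ converges iff $a_n\to0$). An interval is a set $[a,b],[a,b),(a,b]$ or $(a,b)$ with $a<b$ in $\mathcal{R}$, of length $l=b-a$. A cover of $A\subseteq\mathcal{R}$ is a sequence of intervals $(S_n)_{n\ge1}$ with $A\subseteq\bigcup_n S_n$ and $\sum_n l(S_n)$ convergent in $\mathcal{R}$. $A$ is called outer measurable if the infimum $\inf\{\sum_n l(S_n): (S_n)\text{ a cover of }A\}$ exists in $\mathcal{R}$; this infimum is then called the outer measure $M_u(A)$. An outer measurable set $A\subseteq\mathcal{R}$ is L-measurable if for every outer measurable $B\subseteq\mathcal{R}$ both $A\cap B$ and $A^c\cap B$ (where $A^c=\mathcal{R}\setminus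 A$) are outer measurable and $M_u(B)=M_u(A\cap B)+M_u(A^c\cap B)$; then its L-measure is $M(A):=M_u(A)$. *)

(* Defs.v *)
From Stdlib Require Import Reals ClassicalEpsilon.
From mathcomp Require Import all_boot all_order all_algebra.
From mathcomp Require Import Rstruct.
Import Order.TTheory GRing.Theory Num.Theory.
Set Implicit Arguments. Unset Strict Implicit. Unset Printing Implicit Defensive.
Local Open Scope ring_scope.

Definition left_finite (f : rat -> R) : Prop :=
  forall q : rat, exists s : seq rat, forall r : rat, r < q -> f r != 0 -> r \in s.

(* The Levi-Civita field (as a set of functions Q -> R) *)
Record LC := MkLC { lcf :> rat -> R ; lcP : left_finite lcf }.

Lemma left_finite0 : left_finite (fun _ => 0).
Proof. by move=> q; exists [::] => r _; rewrite eqxx. Qed.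

Lemma left_finite_add (x y : LC) : left_finite (fun q => x q + y q).
Proof.
move=> q; have [s1 H1] := lcP x q; have [s2 H2] := lcP y q.
exists (s1 ++ s2) => r rq; rewrite mem_cat.
case: (eqVneq (x r) 0) => hx.
  by rewrite hx add0r => hy; rewrite (H2 r rq hy) orbT.
by rewrite (H1 r rq hx).
Qed.

Lemma left_finite_opp (x : LC) : left_finite (fun q => - x q).
Proof. by move=> q; have [s H] := lcP x q; exists s => r rq; rewrite oppr_eq0; apply: H. Qed.

Definition lc_zero : LC := MkLC left_finite0.
Definition lc_add (x y : LC) : LC := MkLC (left_finite_add x y).
Definition lc_opp (x : LC) : LC := MkLC (left_finite_opp x).
Definition lc_sub (x y : LC) : LC := lc_add x (lc_opp y).

(* x > 0 iff x <> 0 and x[min supp x] > 0 : i.e. there is a support point q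
   with x q > 0 below which x vanishes (q is then min supp x). *)
Definition lc_pos (x : LC) : Prop :=
  exists q : rat, 0 < x q /\ forall r : rat, r < q -> x r = 0.

Definition lc_lt (x y : LC) : Prop := lc_pos (lc_sub y x).
Definition lc_le (x y : LC) : Prop := lc_lt x y \/ x = y.

Definition lc_lim (u : nat -> LC) (l : LC) : Prop :=
  forall a b : LC, lc_lt a l -> lc_lt l b ->
    exists N : nat, forall n : nat, (N <= n)%N -> lc_lt a (u n) /\ lc_lt (u n) b.

Fixpoint lc_psum (u : nat -> LC) (N : nat) : LC :=
  match N with
  | O => lc_zero
  | S m => lc_add (lc_psum u m) (u m)
  end.

Definition lc_series (u : nat -> LC) (s : LC) : Prop := lc_lim (lc_psum u) s.

(* intervals [a,b], [a,b), (a,b], (a,b) with a < b; the booleans say whether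
   the left/right endpoint is included *)
Record interval := MkInterval { ia : LC ; ib : LC ; icl : bool ; icr : bool }.
Definition valid_interval (I : interval) : Prop := lc_lt (ia I) (ib I).
Definition in_interval (I : interval) (x : LC) : Prop :=
  (if icl I then lc_le (ia I) x else lc_lt (ia I) x) /\
  (if icr I then lc_le x (ib I) else lc_lt x (ib I)).
Definition ilength (I : interval) : LC := lc_sub (ib I) (ia I).

Definition lcset := LC -> Prop.

Definition is_cover (A : lcset) (S : nat -> interval) : Prop :=
  (forall n, valid_interval (S n)) /\
  (forall x, A x -> exists n, in_interval (S n) x) /\
  (exists s, lc_series (fun n => ilength (S n)) s).

Definition cover_sums (A : lcset) : LC -> Prop :=
  fun s => exists S, is_cover A S /\ lc_series (fun n => ilength (S n)) s.

Definition is_inf (P : LC -> Prop) (m : LC) : Prop :=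
  (forall s, P s -> lc_le m s) /\
  (forall m', (forall s, P s -> lc_le m' s) -> lc_le m' m).

Definition outer_measurable (A : lcset) : Prop := exists m, is_inf (cover_sums A) m.

(* outer measure: the infimum (whenever it exists; otherwise an unspecified value) *)
Definition Mu (A : lcset) : LC :=
  epsilon (inhabits lc_zero) (fun m => is_inf (cover_sums A) m).

Definition setI (A B : lcset) : lcset := fun x => A x /\ B x.
Definition setC (A : lcset) : lcset := fun x => ~ A x.

Definition L_measurable (A : lcset) : Prop :=
  outer_measurable A /\
  forall B : lcset, outer_measurable B ->
    outer_measurable (setI A B) /\ outer_measurable (setI (setC A) B) /\
    Mu B = lc_add (Mu (setI A B)) (Mu (setI (setC A) B)).

Definition Mmeas (A : lcset) : LC := Mu A.

(* Main.v *)
Require Import Defs.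
From Stdlib Require Import Reals ClassicalEpsilon Classical FunctionalExtensionality ProofIrrelevance.
From Stdlib Require Cantor.
From mathcomp Require Import all_boot all_order all_algebra.
From mathcomp Require Import Rstruct.
From mathcomp Require Import lra.
Import Order.TTheory GRing.Theory Num.Theory.
Set Implicit Arguments. Unset Strict Implicit. Unset Printing Implicit Defensive.
Local Open Scope ring_scope.

Lemma lc_ext (x y : LC) : (forall q, x q = y q) -> x = y.
Proof.
case: x y => [f Hf] [g Hg] /= H.
have E : f = g by apply: functional_extensionality.
subst g; by rewrite (proof_irrelevance _ Hf Hg).
Qed.

Lemma pos_ext (x y : LC) : (forall q, x q = y q) -> lc_pos x -> lc_pos y.
Proof.
move=> H [q [h1 h2]]; exists q; split; first by rewrite -H.
by move=> r rq; rewrite -H h2.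
Qed.

Lemma neg_not_pos (w : LC) p : (forall r, r < p -> w r = 0) -> w p < 0 -> ~ lc_pos w.
Proof.
move=> H hp [q [h1 h2]].
case: (ltgtP q p) => [qp|pq|e].
- by rewrite H // ltxx in h1.
- by rewrite h2 // ltxx in hp.
- subst q; have := lt_trans h1 hp; by rewrite ltxx.
Qed.

Lemma pos_not_both (w : LC) : lc_pos w -> ~ lc_pos (lc_opp w).
Proof.
move=> [p [h1 h2]]; apply: (@neg_not_pos _ p) => [r rp|] /=.
  by rewrite h2 // oppr0.
by rewrite oppr_lt0.
Qed.

Lemma pos_add (x y : LC) : lc_pos x -> lc_pos y -> lc_pos (lc_add x y).
Proof.
move=> [p [h1 h2]] [q [k1 k2]].
case: (ltgtP p q) => [pq|qp|e].
- exists p; split=> /=; first by rewrite (k2 _ pq) addr0.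
  move=> r rp; rewrite h2 // k2 ?addr0 //; exact: lt_trans rp pq.
- exists q; split=> /=; first by rewrite (h2 _ qp) add0r.
  move=> r rq; rewrite k2 // h2 ?addr0 //; exact: lt_trans rq qp.
- subst q; exists p; split=> /=; first by rewrite addr_gt0.
  by move=> r rp; rewrite h2 // k2 // addr0.
Qed.

Lemma seq_min (s : seq rat) : s != [::] -> exists2 m, m \in s & forall x, x \in s -> m <= x.
Proof.
elim: s => // a s IH _.
case: (eqVneq s [::]) => [->|ns].
  exists a; first by rewrite inE eqxx.
  by move=> x; rewrite inE => /eqP ->.
have [m ms hm] := IH ns.
case: (leP a m) => am.
  exists a; first by rewrite inE eqxx.
  move=> x; rewrite inE => /orP [/eqP ->//|xs]; exact: le_trans am (hm _ xs).
exists m; first by rewrite inE ms orbT.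
move=> x; rewrite inE => /orP [/eqP ->|xs]; [exact: ltW | exact: hm].
Qed.

Lemma minsupp (w : LC) : (exists r, w r != 0) ->
  exists p, w p != 0 /\ forall r, r < p -> w r = 0.
Proof.
move=> [r hr]; have [s hs] := lcP w (r + 1).
set s' := [seq x <- s | w x != 0].
have rs : r \in s' by rewrite mem_filter hr hs // ltrDl.
have [|m ms hm] := @seq_min s'; first by apply/eqP => E; rewrite E in rs.
exists m; split; first by move: ms; rewrite mem_filter => /andP [].
move=> x xm; apply/eqP; apply: contraT => hx.
have xr : x < r + 1.
  have := hm _ rs => mr; apply: lt_le_trans xm _; apply: le_trans mr _; apply: ltW; by rewrite ltrDl.
have : x \in s' by rewrite mem_filter hx hs.
by move/hm; rewrite leNgt xm.
Qed.

Lemma pos_or (w : LC) : (exists r, w r != 0) -> lc_pos w \/ lc_pos (lc_opp w).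
Proof.
move=> /minsupp [p [h1 h2]].
case: (ltgtP (w p) 0) => [n|g|e]; last by rewrite e eqxx in h1.
- right; exists p; split=> /=; first by rewrite oppr_gt0.
  by move=> r rp; rewrite h2 // oppr0.
- left; by exists p.
Qed.

Notation lt := lc_lt.
Notation le := lc_le.

Lemma lt_shift (x y x' y' : LC) : (forall r, y r - x r = y' r - x' r) -> lt x y -> lt x' y'.
Proof. move=> H; apply: pos_ext => q /=; exact: H. Qed.

Lemma le_shift (x y x' y' : LC) : (forall r, y r - x r = y' r - x' r) -> le x y -> le x' y'.
Proof.
move=> H [h|e]; first by left; exact: lt_shift h.
right; subst y; apply: lc_ext => r; have := H r; rewrite subrr => /eqP.
by rewrite eq_sym subr_eq0 => /eqP ->.
Qed.

Lemma lt_irr (x : LC) : ~ lt x x.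
Proof. move=> [p [h _]]; move: h => /=; by rewrite subrr ltxx. Qed.

Lemma lt_trans' (x y z : LC) : lt x y -> lt y z -> lt x z.
Proof.
move=> h1 h2; have := pos_add h2 h1; apply: pos_ext => q /=; lra.
Qed.

Lemma lt_total (x y : LC) : lt x y \/ x = y \/ lt y x.
Proof.
case: (classic (exists r, (lc_sub y x) r != 0)) => [h|h].
  case: (pos_or h) => [p|p]; [by left | right; right].
  move: p; apply: pos_ext => q /=; lra.
right; left; apply: lc_ext => r; apply/eqP; apply: contraT => hr.
case: h; exists r => /=; apply: contra hr; rewrite subr_eq0; by move/eqP ->.
Qed.

Lemma lt_asym (x y : LC) : lt x y -> ~ lt y x.
Proof. move=> h1 h2; exact: lt_irr (lt_trans' h1 h2). Qed.

Lemma le_refl' (x : LC) : le x x.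
Proof. by right. Qed.

Lemma lt_le_trans' (x y z : LC) : lt x y -> le y z -> lt x z.
Proof. move=> h [h'|<-] //; exact: lt_trans' h h'. Qed.

Lemma le_lt_trans' (x y z : LC) : le x y -> lt y z -> lt x z.
Proof. move=> [h'|->] h //; exact: lt_trans' h' h. Qed.

Lemma le_trans' (x y z : LC) : le x y -> le y z -> le x z.
Proof. move=> [h|->] h' //; left; exact: lt_le_trans' h h'. Qed.

Lemma lt_le (x y : LC) : lt x y -> le x y.
Proof. by left. Qed.

Lemma not_lt_le (x y : LC) : ~ lt y x -> le x y.
Proof. move=> h; case: (lt_total x y) => [a|[b|c]]; [by left|by right|by []]. Qed.

Lemma le_not_lt (x y : LC) : le x y -> ~ lt y x.
Proof. move=> [h|->]; [exact: lt_asym | exact: lt_irr]. Qed.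

Lemma le_antisym' (x y : LC) : le x y -> le y x -> x = y.
Proof. move=> [h|//] h'; by case: (le_not_lt h' h). Qed.

Lemma lt_add (a b c d : LC) : lt a b -> lt c d -> lt (lc_add a c) (lc_add b d).
Proof. move=> h1 h2; have := pos_add h1 h2; apply: pos_ext => q /=; lra. Qed.

Lemma lt_le_add (a b c d : LC) : lt a b -> le c d -> lt (lc_add a c) (lc_add b d).
Proof.
move=> h1 [h2|<-]; first exact: lt_add.
by apply: lt_shift h1 => r /=; lra.
Qed.

Lemma le_add (a b c d : LC) : le a b -> le c d -> le (lc_add a c) (lc_add b d).
Proof.
move=> [h1|<-] h2; first by left; exact: lt_le_add.
by apply: le_shift h2 => r /=; lra.
Qed.

Lemma pos_lt (x : LC) : lc_pos x <-> lt lc_zero x.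
Proof. split; apply: pos_ext => q /=; lra. Qed.

Lemma lf_ind (q : rat) : left_finite (fun r => if r == q then (1:R) else 0).
Proof. move=> q'; exists [:: q] => r _; case: (eqVneq r q) => [-> _|ne]; [by rewrite inE | by rewrite eqxx]. Qed.
Definition ind q : LC := MkLC (lf_ind q).

Lemma ind_lt (q r : rat) : r < q -> ind q r = 0.
Proof. by move=> h /=; rewrite lt_eqF. Qed.

Lemma pos_ind q : lc_pos (ind q).
Proof. exists q; split=> /=; first by rewrite eqxx ltr01. by move=> r /ind_lt. Qed.

Lemma pos_agree (x : LC) : lc_pos x -> exists q, forall y : LC,
  (forall r, r < q -> y r = x r) -> lc_pos y.
Proof.
move=> [p [h1 h2]]; exists (p + 1) => y H; exists p; split.
  by rewrite H // ltrDl.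
move=> r rp; rewrite H ?h2 //; apply: lt_trans rp _; by rewrite ltrDl.
Qed.

Lemma lim_char_to (u : nat -> LC) l : lc_lim u l ->
  forall q, exists N, forall n, (N <= n)%N -> forall r, r < q -> u n r = l r.
Proof.
move=> H q.
have [||N HN] := H (lc_sub l (ind q)) (lc_add l (ind q)).
- move: (pos_ind q); apply: pos_ext => r /=; lra.
- move: (pos_ind q); apply: pos_ext => r /=; lra.
exists N => n /HN [h1 h2] r rq.
apply/eqP; rewrite -subr_eq0; apply: contraT => hr.
have [p [hp1 hp2]] := @minsupp (lc_sub (u n) l) (ex_intro _ r hr).
have pr : p <= r.
  rewrite leNgt; apply/negP => rp; move: hr; have := hp2 _ rp => /= ->; by rewrite eqxx.
have pq : p < q by apply: le_lt_trans pr rq.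
case: (ltgtP ((lc_sub (u n) l) p) 0) => [neg|ps|e]; last by rewrite e eqxx in hp1.
- case: (@neg_not_pos _ p _ _ h1) => [s sp|] /=.
  + have := hp2 _ sp; rewrite /= lt_eqF ?(lt_trans sp pq) //; lra.
  + move: neg; rewrite /= lt_eqF //; lra.
- case: (@neg_not_pos _ p _ _ h2) => [s sp|] /=.
  + have := hp2 _ sp; rewrite /= lt_eqF ?(lt_trans sp pq) //; lra.
  + move: ps; rewrite /= lt_eqF //; lra.
Qed.

Lemma lim_char_of (u : nat -> LC) (l : LC) :
  (forall q, exists N, forall n, (N <= n)%N -> forall r, r < q -> u n r = l r) ->
  lc_lim u l.
Proof.
move=> H a b ha hb.
have [q1 H1] := pos_agree ha; have [q2 H2] := pos_agree hb.
have [N1 HN1] := H q1; have [N2 HN2] := H q2.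
exists (maxn N1 N2) => n; rewrite geq_max => /andP [n1 n2]; split.
- apply: H1 => r rq /=; by rewrite HN1.
- apply: H2 => r rq /=; by rewrite HN2.
Qed.

Lemma lim_le (u v : nat -> LC) a b N0 : lc_lim u a -> lc_lim v b ->
  (forall n, (N0 <= n)%N -> le (u n) (v n)) -> le a b.
Proof.
move=> hu hv H; apply: not_lt_le => hba.
have [q Hq] := pos_agree hba.
have [N1 HN1] := lim_char_to hu q; have [N2 HN2] := lim_char_to hv q.
set n := maxn N0 (maxn N1 N2).
have n0 : (N0 <= n)%N by rewrite leq_maxl.
have n1 : (N1 <= n)%N by rewrite /n (leq_trans (leq_maxl N1 N2)) ?leq_maxr.
have n2 : (N2 <= n)%N by rewrite /n (leq_trans (leq_maxr N1 N2)) ?leq_maxr.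
apply: (le_not_lt (H n n0)); apply: Hq => r rq /=; by rewrite HN1 ?HN2.
Qed.

Lemma lim_const (c : LC) : lc_lim (fun _ => c) c.
Proof. apply: lim_char_of => q; by exists 0%N. Qed.

Lemma lim_add (u v : nat -> LC) a b : lc_lim u a -> lc_lim v b ->
  lc_lim (fun n => lc_add (u n) (v n)) (lc_add a b).
Proof.
move=> hu hv; apply: lim_char_of => q.
have [N1 HN1] := lim_char_to hu q; have [N2 HN2] := lim_char_to hv q.
exists (maxn N1 N2) => n; rewrite geq_max => /andP [n1 n2] r rq /=.
by rewrite HN1 ?HN2.
Qed.

Lemma lim_ev (u v : nat -> LC) l N0 : (forall n, (N0 <= n)%N -> u n = v n) ->
  lc_lim u l -> lc_lim v l.
Proof.
move=> E hu; apply: lim_char_of => q.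
have [N HN] := lim_char_to hu q.
exists (maxn N0 N) => n; rewrite geq_max => /andP [n1 n2] r rq.
by rewrite -E ?HN.
Qed.

Lemma psumS (u : nat -> LC) n r : lc_psum u n.+1 r = lc_psum u n r + u n r.
Proof. by []. Qed.

Lemma psum_stable (t : nat -> LC) r N : (forall n, (N <= n)%N -> t n r = 0) ->
  forall M, (N <= M)%N -> lc_psum t M r = lc_psum t N r.
Proof.
move=> H; elim=> [|M IH]; first by rewrite leqn0 => /eqP ->.
rewrite leq_eqVlt => /orP [/eqP <- //|]; rewrite ltnS => NM.
by rewrite psumS IH // H // addr0.
Qed.

Lemma psum_stable2 (t : nat -> LC) r N1 N2 : (forall n, (N1 <= n)%N -> t n r = 0) ->
  (forall n, (N2 <= n)%N -> t n r = 0) -> lc_psum t N1 r = lc_psum t N2 r.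
Proof.
move=> h1 h2.
by rewrite -(psum_stable h1 (leq_maxl N1 N2)) (psum_stable h2 (leq_maxr N1 N2)).
Qed.

Lemma series_conv (t : nat -> LC) :
  (forall q, exists N, forall n, (N <= n)%N -> forall r, r < q -> t n r = 0) ->
  exists C, lc_series t C.
Proof.
move=> H.
pose Nq q := proj1_sig (constructive_indefinite_description _ (H q)).
have HN q : forall n, (Nq q <= n)%N -> forall r, r < q -> t n r = 0.
  exact: proj2_sig (constructive_indefinite_description _ (H q)).
pose Cf r := lc_psum t (Nq (r + 1)) r.
have key q r : r < q -> Cf r = lc_psum t (Nq q) r.
  move=> rq; apply: psum_stable2 => n hn.
    by apply: HN hn _ _; rewrite ltrDl.
  exact: HN hn _ rq.
have lf : left_finite Cf.
  move=> q; have [s hs] := lcP (lc_psum t (Nq q)) q.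
  exists s => r rq; rewrite (key q) //; exact: hs.
exists (MkLC lf); apply: lim_char_of => q; exists (Nq q) => n hn r rq /=.
rewrite (key q) // (psum_stable _ hn) // => m hm; exact: HN hm _ rq.
Qed.

Lemma psum_le (c d : nat -> LC) n : (forall k, le (c k) (d k)) ->
  le (lc_psum c n) (lc_psum d n).
Proof. move=> H; elim: n => [|n IH] /=; [exact: le_refl' | exact: le_add]. Qed.

Lemma psum_mono (c : nat -> LC) n m : (forall k, le lc_zero (c k)) -> (n <= m)%N ->
  le (lc_psum c n) (lc_psum c m).
Proof.
move=> H; elim: m => [|m IH]; first by rewrite leqn0 => /eqP ->; exact: le_refl'.
rewrite leq_eqVlt => /orP [/eqP <-|]; first exact: le_refl'.
rewrite ltnS => nm; apply: le_trans' (IH nm) _ => /=.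
have := le_add (le_refl' (lc_psum c m)) (H m); apply: le_shift => r /=; lra.
Qed.

Lemma psum_le_lim (c : nat -> LC) s n : (forall k, le lc_zero (c k)) ->
  lc_series c s -> le (lc_psum c n) s.
Proof.
move=> H hs; apply: (@lim_le (fun _ => lc_psum c n) (lc_psum c) _ _ n (@lim_const (lc_psum c n)) hs) => m nm.
exact: psum_mono.
Qed.

Lemma term_le_lim (c : nat -> LC) s k : (forall k, le lc_zero (c k)) ->
  lc_series c s -> le (c k) s.
Proof.
move=> H hs; apply: le_trans' (@psum_le_lim c s k.+1 H hs).
have := le_add (@psum_mono c 0 k H isT) (le_refl' (c k)); apply: le_shift => r /=; lra.
Qed.

Lemma lim_nonneg (c : nat -> LC) s : (forall k, le lc_zero (c k)) ->
  lc_series c s -> le lc_zero s.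
Proof. move=> H hs; apply: le_trans' (@psum_le_lim c s 0 H hs); exact: le_refl'. Qed.

Lemma sq_zero (x y : LC) q : le lc_zero x -> le x y -> (forall r, r < q -> y r = 0) ->
  forall r, r < q -> x r = 0.
Proof.
move=> h0 hxy hy r rq; apply/eqP; apply: contraT => hr.
have [p [hp1 hp2]] := @minsupp x (ex_intro _ r hr).
have pr : p <= r.
  rewrite leNgt; apply/negP => rp; move: hr; have := hp2 _ rp => /= ->; by rewrite eqxx.
have pq : p < q by apply: le_lt_trans pr rq.
have xp : 0 < x p.
  case: (ltgtP (x p) 0) => [neg|//|e]; last by rewrite e eqxx in hp1.
  case: h0 => [h0|e]; last by move: hp1; rewrite -e eqxx.
  case: (@neg_not_pos _ p _ _ h0) => [s sp|] /=; first by rewrite hp2 //; lra.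
  lra.
case: hxy => [h|e]; last by move: xp; rewrite e hy // ltxx.
case: (@neg_not_pos _ p _ _ h) => [s sp|] /=.
  rewrite hp2 // hy //; [lra | exact: lt_trans sp pq].
rewrite hy //; lra.
Qed.

Lemma len_nonneg (I : Defs.interval) : valid_interval I -> le lc_zero (ilength I).
Proof. move=> h; left; move: h; apply: pos_ext => q /=; lra. Qed.

Lemma cover_sum_nonneg (A : lcset) s : cover_sums A s -> le lc_zero s.
Proof.
move=> [S [[v _] hs]]; apply: lim_nonneg hs => k; exact: len_nonneg.
Qed.

Lemma cover_sums_mono (G H : lcset) s : (forall x, G x -> H x) ->
  cover_sums H s -> cover_sums G s.
Proof.
move=> GH [S [[v [c e]] hs]]; exists S; split=> //; split=> //; split=> //.
move=> x /GH; exact: c.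
Qed.

Lemma inf_unique (P : LC -> Prop) m m' : is_inf P m -> is_inf P m' -> m = m'.
Proof.
move=> [h1 h2] [k1 k2]; apply: le_antisym'; [exact: k2 | exact: h2].
Qed.

Lemma Mu_spec (A : lcset) m : is_inf (cover_sums A) m -> Mu A = m.
Proof.
move=> h.
have e := (epsilon_spec (inhabits lc_zero) (fun m => is_inf (cover_sums A) m) (ex_intro _ m h)).
exact: inf_unique e h.
Qed.

Lemma Mu_inf (A : lcset) : outer_measurable A -> is_inf (cover_sums A) (Mu A).
Proof. move=> [m h]; by rewrite (Mu_spec h). Qed.

Lemma inf_approx (P : LC -> Prop) m c : is_inf P m -> lt m c -> exists s, P s /\ lt s c.
Proof.
move=> [h1 h2] mc; apply: NNPP => H.
have : le c m.
  apply: h2 => s Ps; apply: not_lt_le => sc; apply: H; by exists s.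
by move/le_not_lt.
Qed.

Lemma Mu_nonneg (A : lcset) : outer_measurable A -> le lc_zero (Mu A).
Proof.
move=> /Mu_inf [h1 h2]; apply: h2 => s; exact: cover_sum_nonneg.
Qed.

Lemma Mu_mono (G H : lcset) : outer_measurable G -> outer_measurable H ->
  (forall x, G x -> H x) -> le (Mu G) (Mu H).
Proof.
move=> /Mu_inf [g1 g2] /Mu_inf [h1 h2] GH; apply: h2 => s hs.
apply: g1; exact: cover_sums_mono hs.
Qed.

Definition interl (S T : nat -> Defs.interval) (n : nat) : Defs.interval :=
  if odd n then T n./2 else S n./2.

Lemma psum_interl (S T : nat -> Defs.interval) n r :
  lc_psum (fun k => ilength (interl S T k)) n r =
  lc_psum (fun k => ilength (S k)) (uphalf n) r + lc_psum (fun k => ilength (T k)) n./2 r.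
Proof.
elim: n => [|n IH] /=; first by rewrite addr0.
rewrite IH /interl; case: (boolP (odd n)) => on.
  rewrite uphalf_half on /=; lra.
rewrite uphalf_half (negbTE on) /=; lra.
Qed.

Lemma cover_bin (E F G : lcset) s t : cover_sums E s -> cover_sums F t ->
  (forall x, G x -> E x \/ F x) -> cover_sums G (lc_add s t).
Proof.
move=> [S [[vS [cS _]] hS]] [T [[vT [cT _]] hT]] GEF.
have hW : lc_series (fun n => ilength (interl S T n)) (lc_add s t).
  apply: lim_char_of => q.
  have [N1 H1] := lim_char_to hS q; have [N2 H2] := lim_char_to hT q.
  exists (N1 + N2).*2 => n hn r rq.
  have h2 : (N1 + N2 <= n./2)%N by rewrite geq_half_double.
  have h1 : (N1 + N2 <= uphalf n)%N.
    apply: leq_trans h2 _; rewrite uphalf_half; exact: leq_addl.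
  rewrite psum_interl /= H1 ?H2 //.
    apply: leq_trans h2; exact: leq_addl.
  apply: leq_trans h1; exact: leq_addr.
exists (interl S T); split=> //; split; last split.
- by move=> n; rewrite /interl; case: (odd n).
- move=> x /GEF [/cS [n hn]|/cT [n hn]].
    exists n.*2; by rewrite /interl odd_double half_double.
  exists (n.*2).+1; by rewrite /interl /= odd_double /= uphalf_double.
- by exists (lc_add s t).
Qed.

Lemma psum_sum (u : nat -> LC) n r : lc_psum u n r = \sum_(0 <= k < n) u k r.
Proof.
elim: n => [|n IH]; first by rewrite big_geq.
by rewrite psumS IH big_nat_recr.
Qed.

Definition dinterl (S : nat -> nat -> Defs.interval) (j : nat) : Defs.interval :=
  S (Cantor.of_nat j).1 (Cantor.of_nat j).2.

Lemma of_nat_inj : injective Cantor.of_nat.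
Proof. move=> a b e; by rewrite -(Cantor.cancel_to_of a) e Cantor.cancel_to_of. Qed.

Lemma box_exists (P : nat -> nat -> Prop) N :
  (forall n K K', (K <= K')%N -> P n K -> P n K') ->
  (forall n, exists K, P n K) -> exists K, forall n, (n < N)%N -> P n K.
Proof.
move=> mono H; elim: N => [|N [K HK]]; first by exists 0%N.
have [KN HKN] := H N; exists (maxn K KN) => n; rewrite ltnS leq_eqVlt => /orP [/eqP ->|nN].
  apply: mono HKN; exact: leq_maxr.
apply: mono (HK n nN); exact: leq_maxl.
Qed.

Lemma cover_count (G : nat -> lcset) (S : nat -> nat -> Defs.interval) (c : nat -> LC) (B : lcset) :
  (forall n, is_cover (G n) (S n) /\ lc_series (fun k => ilength (S n k)) (c n)) ->
  (forall q, exists N, forall n, (N <= n)%N -> forall r, r < q -> c n r = 0) ->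
  (forall x, B x -> exists n, G n x) ->
  exists C, lc_series c C /\ cover_sums B C.
Proof.
move=> HS hc HB.
have [C hC] := series_conv hc.
have lnn n k : le lc_zero (ilength (S n k)).
  apply: len_nonneg; by case: (HS n) => [[v _] _].
have hW : lc_series (fun j => ilength (dinterl S j)) C.
  apply: lim_char_of => q.
  have [N1 HN1] := hc q.
  have zbig n k r : (N1 <= n)%N -> r < q -> ilength (S n k) r = 0.
    move=> nN rq; apply: (@sq_zero _ (c n) q (lnn n k)) => //.
      apply: term_le_lim (lnn n) _; by case: (HS n).
    by move=> r' r'q; apply: HN1.
  pose P n K := forall k, (K <= k)%N -> forall r, r < q ->
      ilength (S n k) r = 0 /\ lc_psum (fun k => ilength (S n k)) k r = c n r.
  have [K HK] : exists K, forall n, (n < N1)%N -> P n K.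
    apply: box_exists.
      move=> n K K' KK' h k hk; apply: h; exact: leq_trans KK' hk.
    move=> n; have [Kn HKn] := lim_char_to (proj2 (HS n)) q.
    exists Kn => k hk r rq; split; last exact: HKn.
    have e1 := HKn k.+1 (leq_trans hk (leqnSn k)) r rq.
    have e2 := HKn k hk r rq.
    move: e1; rewrite psumS e2; lra.
  have [N2 HN2] := lim_char_to hC q.
  have Cr r : r < q -> C r = lc_psum c N1 r.
    move=> rq; rewrite -(HN2 (maxn N1 N2)) ?leq_maxr //.
    apply: psum_stable; last exact: leq_maxl.
    by move=> n hn; apply: HN1.
  pose bx := [seq (n, k) | n <- iota 0 N1, k <- iota 0 K].
  have mbx p : (p \in bx) = (p.1 < N1)%N && (p.2 < K)%N.
    case: p => a b; apply/allpairsP/andP => /=.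
      by move=> [[x y] [/= hx hy [-> ->]]]; move: hx hy; rewrite !mem_iota.
    by move=> [ha hb]; exists (a, b); rewrite /= !mem_iota.
  pose J0 := (\max_(p <- bx) (Cantor.to_nat p).+1)%N.
  have hJ0 p : p \in bx -> (Cantor.to_nat p < J0)%N.
    move=> pb; exact: (@leq_bigmax_seq _ bx predT (fun p => (Cantor.to_nat p).+1) p pb).
  exists J0 => J hJ r rq.
  pose g (p : nat * nat) := ilength (S p.1 p.2) r.
  rewrite psum_sum (Cr r rq) psum_sum.
  have -> : \sum_(0 <= k < J) ilength (dinterl S k) r = \sum_(j <- iota 0 J) g (Cantor.of_nat j).
    by rewrite /index_iota subn0.
  have -> : \sum_(j <- iota 0 J) g (Cantor.of_nat j) =
      \sum_(j <- iota 0 J | Cantor.of_nat j \in bx) g (Cantor.of_nat j).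
    symmetry; apply: big_rmcond_in => j _; rewrite mbx negb_and -!leqNgt => /orP [h|h]; rewrite /g.
      exact: zbig.
    case: (ltnP (Cantor.of_nat j).1 N1) => h1; last exact: zbig.
    by have [] := HK _ h1 _ h r rq.
  rewrite -big_filter -(big_map Cantor.of_nat predT g).
  rewrite (perm_big bx); last first.
    apply: uniq_perm.
    - rewrite map_inj_uniq; last exact: of_nat_inj.
      apply: filter_uniq; exact: iota_uniq.
    - apply: allpairs_uniq; [exact: iota_uniq | exact: iota_uniq | by move=> [? ?] [? ?] _ _].
    - move=> p; apply/mapP/idP.
        by move=> [j]; rewrite mem_filter => /andP [hj _] ->.
      move=> pb; exists (Cantor.to_nat p); last by rewrite Cantor.cancel_of_to.
      rewrite mem_filter Cantor.cancel_of_to pb mem_iota add0n /=.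
      exact: leq_trans (hJ0 p pb) hJ.
  rewrite big_allpairs /index_iota subn0; apply: eq_big_seq => n.
  rewrite mem_iota add0n /= => nN.
  have [_ <-] := HK n nN K (leqnn K) r rq.
  by rewrite psum_sum /index_iota subn0.
exists C; split=> //; exists (dinterl S); split=> //; split.
- move=> j; rewrite /dinterl; by case: (HS (Cantor.of_nat j).1) => [[v _] _].
split.
- move=> x /HB [n Gn]; have [[_ [cv _]] _] := HS n; have [k hk] := cv x Gn.
  exists (Cantor.to_nat (n, k)); by rewrite /dinterl Cantor.cancel_of_to.
- by exists C.
Qed.

Lemma lf_half (e : LC) : left_finite (fun q => e q / 2).
Proof.
move=> q; have [s hs] := lcP e q; exists s => r rq h; apply: hs rq _.
by apply: contra h => /eqP ->; rewrite mul0r.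
Qed.
Definition lc_half (e : LC) : LC := MkLC (lf_half e).

Lemma pos_half (e : LC) : lc_pos e -> lc_pos (lc_half e).
Proof.
move=> [p [h1 h2]]; exists p; split=> /=; first by rewrite divr_gt0.
by move=> r rp; rewrite h2 // mul0r.
Qed.

Lemma psum_zero (t : nat -> LC) r n : (forall k, t k r = 0) -> lc_psum t n r = 0.
Proof. move=> H; elim: n => [|n IH] //=; by rewrite IH H addr0. Qed.

Lemma psum_add (c d : nat -> LC) n :
  lc_psum (fun k => lc_add (c k) (d k)) n = lc_add (lc_psum c n) (lc_psum d n).
Proof.
apply: lc_ext => r; elim: n => [|n IH] /=; first by rewrite addr0.
rewrite IH /=; lra.
Qed.

Lemma ex_min (P : nat -> Prop) : (exists n, P n) -> exists n, P n /\ forall m, (m < n)%N -> ~ P m.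
Proof.
move=> [n Pn]; apply: NNPP => H.
suff : forall k m, (m <= k)%N -> ~ P m by move/(_ n n (leqnn n)).
elim=> [|k IH] m.
  rewrite leqn0 => /eqP -> P0; apply: H; exists 0%N; split=> // m'; by rewrite ltn0.
rewrite leq_eqVlt => /orP [/eqP ->|]; last exact: IH.
move=> Pk; apply: H; exists k.+1; split=> // m'; rewrite ltnS; exact: IH.
Qed.

Lemma rat_arch (a b : rat) : exists N : nat, forall n, (N <= n)%N -> b < a + (n%:R : rat).
Proof.
have h := @archi_boundP _ `|b - a| (normr_ge0 _).
exists (Num.Def.archi_bound `|b - a|) => n hn.
have h2 : ((Num.Def.archi_bound `|b - a|)%:R <= (n%:R : rat)) by rewrite ler_nat.
have h3 : b - a <= `|b - a| by exact: ler_norm.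
lra.
Qed.

Fixpoint Cs (A : nat -> lcset) (X : lcset) (N : nat) : lcset :=
  match N with O => X | S N => Defs.setI (Defs.setC (A N)) (Cs A X N) end.
Definition Ds (A : nat -> lcset) (X : lcset) (N : nat) : lcset := Defs.setI (A N) (Cs A X N).
Definition Bp (A : nat -> lcset) (X : lcset) (N : nat) : lcset :=
  fun x => X x /\ exists n, (n < N)%N /\ A n x.

Lemma Cs_char A X N x : Cs A X N x <-> X x /\ forall m, (m < N)%N -> ~ A m x.
Proof.
elim: N => [|N IH] /=; first by split=> [h|[]//]; split=> // m; rewrite ltn0.
rewrite /Defs.setI /Defs.setC IH; split.
  move=> [h1 [h2 h3]]; split=> // m; rewrite ltnS leq_eqVlt => /orP [/eqP ->//|]; exact: h3.
move=> [h1 h2]; split; first by apply: h2.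
split=> // m mN; apply: h2; exact: ltnW.
Qed.

Section Main.
Variables (A : nat -> lcset) (X : lcset).
Hypothesis hA : forall n, L_measurable (A n).
Hypothesis hlim : lc_lim (fun n => Mmeas (A n)) lc_zero.
Hypothesis hX : outer_measurable X.

Lemma OM_Cs N : outer_measurable (Cs A X N).
Proof. elim: N => [|N IH] //=; have [_ H] := hA N; by case: (H _ IH) => _ []. Qed.

Lemma OM_Ds N : outer_measurable (Ds A X N).
Proof. have [_ H] := hA N; by case: (H _ (OM_Cs N)). Qed.

Lemma Mu_Cs N : Mu (Cs A X N) = lc_add (Mu (Ds A X N)) (Mu (Cs A X N.+1)).
Proof. have [_ H] := hA N; by case: (H _ (OM_Cs N)) => _ [_ ->]. Qed.

Definition bs N := lc_psum (fun n => Mu (Ds A X n)) N.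

Lemma Mu_X N r : Mu X r = bs N r + Mu (Cs A X N) r.
Proof.
elim: N => [|N IH] /=; first by rewrite add0r.
rewrite IH Mu_Cs /=; lra.
Qed.

Lemma B_lower N s : cover_sums (Bp A X N) s -> le (bs N) s.
Proof.
move=> hs.
have h : le (lc_sub (Mu X) s) (Mu (Cs A X N)).
  have [_ g] := Mu_inf (OM_Cs N); apply: g => t ht.
  have [l _] := Mu_inf hX.
  have hcov : cover_sums X (lc_add s t).
    apply: cover_bin hs ht _ => x Xx.
    case: (classic (exists n, (n < N)%N /\ A n x)) => h.
      by left.
    right; apply/Cs_char; split=> // m mN Am; apply: h; by exists m.
  have := l _ hcov; apply: le_shift => r /=; lra.
move: h; apply: le_shift => r /=; have := Mu_X N r; lra.
Qed.

Lemma B_approx N e : lc_pos e -> exists s, cover_sums (Bp A X N.+1) s /\ lt s (lc_add (bs N.+1) e).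
Proof.
elim: N e => [|N IH] e he.
  have [|s [hs1 hs2]] := inf_approx (c := lc_add (Mu (Ds A X 0)) e) (Mu_inf (OM_Ds 0)).
    move: he; apply: pos_ext => r /=; lra.
  exists s; split.
    apply: cover_sums_mono hs1 => x [Xx [n [n0 An]]].
    move: n0; rewrite ltnS leqn0 => /eqP e0; subst n; by split.
  by move: hs2; apply: lt_shift => r /=; lra.
have he2 := pos_half he.
have [s1 [hs1 hs1']] := IH _ he2.
have [|s2 [hs2 hs2']] := inf_approx (c := lc_add (Mu (Ds A X N.+1)) (lc_half e)) (Mu_inf (OM_Ds N.+1)).
  move: he2; apply: pos_ext => r /=; lra.
exists (lc_add s1 s2); split.
  apply: cover_bin hs1 hs2 _ => x [Xx [n [nN An]]].
  case: (classic (exists n, (n < N.+1)%N /\ A n x)) => h; first by left; split.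
  right; split.
    move: nN; rewrite ltnS leq_eqVlt => /orP [/eqP e0|nN]; first by rewrite -e0.
    by case: h; exists n.
  apply/Cs_char; split=> // m mN Am; apply: h; by exists m.
have := lt_add hs1' hs2'; apply: lt_shift => r /=; lra.
Qed.

Lemma B_inf N : is_inf (cover_sums (Bp A X N.+1)) (bs N.+1).
Proof.
split; first by move=> s; exact: B_lower.
move=> m' hm; apply: not_lt_le => hbm.
have [s [hs1 hs2]] := @B_approx N (lc_sub m' (bs N.+1)) hbm.
apply: (le_not_lt (hm _ hs1)); move: hs2; apply: lt_shift => r /=; lra.
Qed.

Lemma Ds_van : forall q, exists N, forall n, (N <= n)%N -> forall r, r < q -> Mu (Ds A X n) r = 0.
Proof.
move=> q; have [N HN] := lim_char_to hlim q; exists N => n hn.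
apply: (@sq_zero _ (Mu (A n))).
- exact: Mu_nonneg (OM_Ds n).
- apply: Mu_mono (OM_Ds n) (proj1 (hA n)) _; by move=> x [].
- move=> r rq; exact: HN.
Qed.


Lemma main_aux :
  outer_measurable (fun x => X x /\ exists n, A n x) /\
  (exists L, lc_lim (fun N => Mu (fun x => X x /\ exists n, (n < N)%N /\ A n x)) L) /\
  lc_lim (fun N => Mu (fun x => X x /\ exists n, (n < N)%N /\ A n x))
         (Mu (fun x => X x /\ exists n, A n x)).
Proof.
have [L hL] := series_conv Ds_van.
pose Bset := fun x => X x /\ exists n, A n x.
have hinf : is_inf (cover_sums Bset) L.
  split.
    move=> s hs; apply: (@lim_le bs (fun _ => s) L s 1 hL (@lim_const s)).
    case=> // N _; apply: B_lower; apply: cover_sums_mono hs.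
    by move=> x [Xx [n [_ An]]]; split=> //; exists n.
  move=> m' hm; apply: not_lt_le => hLm.
  have [p [hp1 hp2]] := hLm.
  pose q := p + 1.
  pose e n := ind (q + n%:R).
  have e_van : forall q', exists N, forall n, (N <= n)%N -> forall r, r < q' -> e n r = 0.
    move=> q'; have [N HN] := rat_arch q q'; exists N => n hn r rq.
    apply: ind_lt; exact: lt_trans rq (HN n hn).
  have hcov n : exists pr : (nat -> Defs.interval) * LC, is_cover (Ds A X n) pr.1 /\
      lc_series (fun k => ilength (pr.1 k)) pr.2 /\ lt pr.2 (lc_add (Mu (Ds A X n)) (e n)).
    have [|s [[S [hc hs]] hs']] := inf_approx (c := lc_add (Mu (Ds A X n)) (e n)) (Mu_inf (OM_Ds n)).
      move: (pos_ind (q + n%:R)); apply: pos_ext => r /=; lra.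
    by exists (S, s).
  pose F n := proj1_sig (constructive_indefinite_description _ (hcov n)).
  have HF n : is_cover (Ds A X n) (F n).1 /\
      lc_series (fun k => ilength ((F n).1 k)) (F n).2 /\ lt (F n).2 (lc_add (Mu (Ds A X n)) (e n)).
    exact: proj2_sig (constructive_indefinite_description _ (hcov n)).
  pose c n := (F n).2.
  have c_van : forall q', exists N, forall n, (N <= n)%N -> forall r, r < q' -> c n r = 0.
    move=> q'; have [N1 H1] := lim_char_to hlim q'; have [N2 H2] := e_van q'.
    exists (maxn N1 N2) => n; rewrite geq_max => /andP [n1 n2] r rq.
    apply: (@sq_zero _ (lc_add (Mu (A n)) (e n)) q') => //.
    - apply: (@cover_sum_nonneg (Ds A X n)); exists (F n).1; by case: (HF n) => [h1 [h2 _]].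
    - apply: le_trans' (lt_le (proj2 (proj2 (HF n)))) _; apply: le_add (le_refl' _).
      apply: Mu_mono (OM_Ds n) (proj1 (hA n)) _; by move=> x [].
    - move=> r' r'q /=; have := H1 n n1 r' r'q; have := H2 n n2 r' r'q; rewrite /Mmeas /=; lra.
  have Bsub : forall x, Bset x -> exists n, Ds A X n x.
    move=> x [Xx ex]; have [n [An hn]] := ex_min ex; exists n; split=> //.
    by apply/Cs_char; split.
  have [C [hC1 hC2]] := @cover_count (Ds A X) (fun n => (F n).1) c Bset
      (fun n => conj (proj1 (HF n)) (proj1 (proj2 (HF n)))) c_van Bsub.
  have [E' hE'] := series_conv e_van.
  have E'0 : forall r, r < q -> E' r = 0.
    move=> r rq; have [N HN] := lim_char_to hE' q; rewrite -(HN N (leqnn N) r rq).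
    apply: psum_zero => k; apply: ind_lt.
    have : (0 : rat) <= k%:R by rewrite ler0n.
    move: rq; rewrite /q; lra.
  have h1 : le m' C := hm _ hC2.
  have h2 : le C (lc_add L E').
    apply: (@lim_le (lc_psum c) (fun n => lc_add (bs n) (lc_psum e n)) _ _ 0 hC1 (lim_add hL hE')).
    move=> n _; rewrite /bs -psum_add; apply: psum_le => k.
    exact: lt_le (proj2 (proj2 (HF k))).
  have h3 : lt (lc_add L E') m'.
    have pq : p < q by rewrite /q ltrDl.
    exists p; split.
      move: hp1 => /=; rewrite E'0 //; lra.
    move=> r rp; have := hp2 r rp => /=; rewrite E'0 ?(lt_trans rp pq) //; lra.
  exact: le_not_lt (le_trans' h1 h2) h3.
have hMu : Mu Bset = L := Mu_spec hinf.
split; first by exists L.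
have hlim2 : lc_lim (fun N => Mu (fun x => X x /\ exists n, (n < N)%N /\ A n x)) L.
  apply: (@lim_ev bs _ L 1) hL; case=> // N _.
  by rewrite (Mu_spec (B_inf N)).
split; first by exists L.
by rewrite /Bset in hMu; rewrite hMu.
Qed.

End Main.

Theorem lemma4p1 (A : nat -> lcset) (X : lcset) :
  (forall n, L_measurable (A n)) ->
  lc_lim (fun n => Mmeas (A n)) lc_zero ->
  outer_measurable X ->
  outer_measurable (fun x => X x /\ exists n, A n x) /\
  (exists L, lc_lim (fun N => Mu (fun x => X x /\ exists n, (n < N)%N /\ A n x)) L) /\
  lc_lim (fun N => Mu (fun x => X x /\ exists n, (n < N)%N /\ A n x))
         (Mu (fun x => X x /\ exists n, A n x)).
Proof. move=> hA hlim hX; exact: main_aux. Qed.
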